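(* For every ordinal $\alpha$: if $(T_\alpha,P_\alpha)$ is consistent, then it is sound, i.e. for every $\mathcal L$-sentence $\varphi$, either $(\mathbb N,T_\alpha,P_\alpha)\not\models_{SK}\varphi\vee\neg\varphi$ or $(\mathbb N,T_\alpha,P_\alpha)\not\models_{SK}\mathscr P(\varphi)$.
   Context: Language. Let $\mathcal L_{\mathbb N}$ be the language of first-order Peano arithmetic and $\mathcal L=\mathcal L_{\mathbb N}\cup\{\mathrm T,\mathrm P\}$ with unary predicates $\mathrm T,\mathrm P$. $\mathcal L$-formulas are in Tait style: literals are $s=t$, $s\neq t$, $\mathrm Tt$, $\neg\mathrm Tt$, $\mathrm Pt$, $\neg\mathrm Pt$; formulas are built from literals by $\wedge,\vee,\forall,\exists$; negation of an arbitrary formula is defined by De Morgan dualities with $\neg\neg\varphi:=\varphi$. A standard Gödel numbering is fixed; $\#e$ is the code of $e$, $\ulcorner e\urcorner$ the numeral of $\#e$, $\mathrm{val}(t)$ the value of a closed term $t$, $\dot\neg$ the primitive recursive function with $\dot\neg(\#\varphi)=\#\neg\varphi$; $\mathrm T\varphi,\mathrm P\varphi$ abbreviate $\mathrm T\ulcorner\varphi\urcorner,\mathrm P\ulcorner\varphi\urcorner$. Semantics. A partial model is $(\mathbb N,T,P)$ with $\mathbb N$ the standard model and $T=(T^+,T^-)$, $P=(P^+,P^-)$ pairs of subsets of $\omega$. Strong Kleene satisfaction $\models_{SK}$: arithmetic literals evaluated in $\mathbb N$; $\mathrm Tt$ satisfied iff $\mathrm{val}(t)\in T^+$, $\neg\mathrm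 Tt$ iff $\mathrm{val}(t)\in T^-$, likewise for $\mathrm P$ with $P^\pm$; conjunction iff both, disjunction iff at least one, $\forall x\varphi(x)$ iff all numeral instances, $\exists x\varphi(x)$ iff some numeral instance. $(T,P)$ is consistent iff $T^+\cap T^-=\emptyset$ and $P^+\cap P^-=\emptyset$. Base paradoxicality. $\mathrm{PA}[\mathrm{SK}]$ is the two-sided sequent calculus for Strong Kleene logic with identity in $\mathcal L$ (initial sequents $\varphi\Rightarrow\varphi$, cut, weakening, the rule from $\Gamma\Rightarrow\Delta,\varphi$ infer $\neg\varphi,\Gamma\Rightarrow\Delta$, usual rules for $\wedge,\vee,\forall,\exists$, reflexivity $\Rightarrow t=t$, replacement from $\Gamma\Rightarrow\Delta,\varphi(t)$ infer $\Gamma\Rightarrow\Delta,s\neq t,\varphi(s)$) plus the initial sequents of Peano arithmetic and the induction rule for all $\mathcal L$-formulas. A sentence $\varphi$ is base paradoxical iff $\mathrm{PA}[\mathrm{SK}]$ derives $\varphi\Leftrightarrow\neg\mathrm T\varphi$ and $\neg\varphi\Leftrightarrow\mathrm T\varphi$ ($\Leftrightarrow$ meaning both sequents). $B(x)$ is an $\mathcal L_{\mathbb N}$-formula defining in $\mathbb N$ the set of codes of base paradoxical sentences, and $\Pi(x):=B(x)\vee B(\dot\neg x)$. Jump and sequence. Let $\mathscr P(x)$ be the $\mathcal L$-formula which is the disjunction of: (1) $x$ codes a sentence and $\Pi(x)$; (2) $x$ codes a sentence $\mathrm Tt$ ($t$ a closed term) and $\mathrm P(\mathrm{val}(t))$;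 (3) $x$ codes a sentence $\neg\mathrm Tt$ and $\mathrm P(\mathrm{val}(t))$; (4) $x$ codes a sentence $\psi\wedge\theta$ and $(\mathrm P\psi\wedge\mathrm P\theta)\vee(\mathrm T\psi\wedge\mathrm P\theta)\vee(\mathrm T\theta\wedge\mathrm P\psi)$; (5) $x$ codes a sentence $\psi\vee\theta$ and $(\mathrm P\psi\wedge\mathrm P\theta)\vee(\neg\mathrm T\psi\wedge\mathrm P\theta)\vee(\neg\mathrm T\theta\wedge\mathrm P\psi)$; (6) $x$ codes a sentence $\forall v\psi$ and $\exists y\,\mathrm P\psi(\dot y)\wedge\forall y(\mathrm P\psi(\dot y)\vee\mathrm T\psi(\dot y))$; (7) $x$ codes a sentence $\exists v\psi$ and $\exists y\,\mathrm P\psi(\dot y)\wedge\forall y(\mathrm P\psi(\dot y)\vee\neg\mathrm T\psi(\dot y))$; here $\psi(\dot y)$ is the code of the result of substituting the numeral of $y$ for $v$. Write $\mathscr P(\varphi)$ for $\mathscr P(\ulcorner\varphi\urcorner)$. Define $\Gamma_{\mathscr{TP}}(T,P)=\big((\{\#\varphi:(\mathbb N,T,P)\models_{SK}\varphi\},\{\#\varphi:(\mathbb N,T,P)\models_{SK}\neg\varphi\}),(\{\#\varphi:(\mathbb N,T,P)\models_{SK}\mathscr P(\varphi)\},\{\#\varphi:(\mathbb N,T,P)\models_{SK}\varphi\vee\neg\varphi\})\big)$, $\varphi$ ranging over $\mathcal L$-sentences. Define $(T_0,P_0)=((\emptyset,\emptyset),(\emptyset,\emptyset))$, $(T_{\beta+1},P_{\beta+1})=\Gamma_{\mathscr{TP}}(T_\beta,P_\beta)$,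 $(T_\lambda,P_\lambda)=\bigcup_{\beta<\lambda}(T_\beta,P_\beta)$ (componentwise union) for limit $\lambda$. *)

(* Defs.v *)
From Stdlib Require Import List Arith Cantor ClassicalEpsilon.
Import ListNotations.

Inductive term : Type :=
| tvar (n : nat)
| tzero
| tsucc (t : term)
| tplus (s t : term)
| tmult (s t : term).

Inductive form : Type :=
| fEq (s t : term) | fNeq (s t : term)
| fT (t : term) | fNT (t : term)
| fP (t : term) | fNP (t : term)
| fAnd (a b : form) | fOr (a b : form)
| fAll (a : form) | fEx (a : form).

Fixpoint neg (f : form) : form :=
  match f with
  | fEq s t => fNeq s t | fNeq s t => fEq s t
  | fT t => fNT t | fNT t => fT t
  | fP t => fNP t | fNP t => fP t
  | fAnd a b => fOr (neg a) (neg b)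
  | fOr a b => fAnd (neg a) (neg b)
  | fAll a => fEx (neg a)
  | fEx a => fAll (neg a)
  end.

Fixpoint tsubst (sg : nat -> term) (t : term) : term :=
  match t with
  | tvar n => sg n
  | tzero => tzero
  | tsucc t => tsucc (tsubst sg t)
  | tplus s t => tplus (tsubst sg s) (tsubst sg t)
  | tmult s t => tmult (tsubst sg s) (tsubst sg t)
  end.

Definition up (sg : nat -> term) : nat -> term :=
  fun n => match n with
           | 0 => tvar 0
           | S k => tsubst (fun m => tvar (S m)) (sg k)
           end.

Fixpoint fsubst (sg : nat -> term) (f : form) : form :=
  match f with
  | fEq s t => fEq (tsubst sg s) (tsubst sg t)
  | fNeq s t => fNeq (tsubst sg s) (tsubst sg t)
  | fT t => fT (tsubst sg t) | fNT t => fNT (tsubst sg t)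
  | fP t => fP (tsubst sg t) | fNP t => fNP (tsubst sg t)
  | fAnd a b => fAnd (fsubst sg a) (fsubst sg b)
  | fOr a b => fOr (fsubst sg a) (fsubst sg b)
  | fAll a => fAll (fsubst (up sg) a)
  | fEx a => fEx (fsubst (up sg) a)
  end.

Definition inst (t : term) : nat -> term :=
  fun n => match n with 0 => t | S k => tvar k end.
(* shift all free variables up by one (eigenvariable freshness) *)
Definition shiftf (f : form) : form := fsubst (fun m => tvar (S m)) f.
Definition succ0 : nat -> term :=
  fun n => match n with 0 => tsucc (tvar 0) | k => tvar k end.

Fixpoint tclosed (k : nat) (t : term) : Prop :=
  match t with
  | tvar n => n < k
  | tzero => True
  | tsucc t => tclosed k t
  | tplus s t | tmult s t => tclosed k s /\ tclosed k t
  end.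

Fixpoint fclosed (k : nat) (f : form) : Prop :=
  match f with
  | fEq s t | fNeq s t => tclosed k s /\ tclosed k t
  | fT t | fNT t | fP t | fNP t => tclosed k t
  | fAnd a b | fOr a b => fclosed k a /\ fclosed k b
  | fAll a | fEx a => fclosed (S k) a
  end.

Definition sentence (f : form) : Prop := fclosed 0 f.

Fixpoint num (n : nat) : term :=
  match n with 0 => tzero | S n => tsucc (num n) end.

Definition cp (a b : nat) : nat := Cantor.to_nat (a, b).

Fixpoint tcode (t : term) : nat :=
  match t with
  | tvar n => cp 0 n
  | tzero => cp 1 0
  | tsucc t => cp 2 (tcode t)
  | tplus s t => cp 3 (cp (tcode s) (tcode t))
  | tmult s t => cp 4 (cp (tcode s) (tcode t))
  end.

Fixpoint code (f : form) : nat :=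
  match f with
  | fEq s t => cp 0 (cp (tcode s) (tcode t))
  | fNeq s t => cp 1 (cp (tcode s) (tcode t))
  | fT t => cp 2 (tcode t) | fNT t => cp 3 (tcode t)
  | fP t => cp 4 (tcode t) | fNP t => cp 5 (tcode t)
  | fAnd a b => cp 6 (cp (code a) (code b))
  | fOr a b => cp 7 (cp (code a) (code b))
  | fAll a => cp 8 (code a)
  | fEx a => cp 9 (code a)
  end.

Definition quote (f : form) : term := num (code f).

Fixpoint eval (rho : nat -> nat) (t : term) : nat :=
  match t with
  | tvar n => rho n
  | tzero => 0
  | tsucc t => S (eval rho t)
  | tplus s t => eval rho s + eval rho t
  | tmult s t => eval rho s * eval rho t
  end.

Definition val (t : term) : nat := eval (fun _ => 0) t.

Record pmodel : Type := PM {
  Tp : nat -> Prop; Tn : nat -> Prop;   (* T = (T+, T-) *)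
  Pp : nat -> Prop; Pn : nat -> Prop }. (* P = (P+, P-) *)

Definition scons (n : nat) (rho : nat -> nat) : nat -> nat :=
  fun k => match k with 0 => n | S k => rho k end.

Fixpoint satE (M : pmodel) (rho : nat -> nat) (f : form) : Prop :=
  match f with
  | fEq s t => eval rho s = eval rho t
  | fNeq s t => eval rho s <> eval rho t
  | fT t => Tp M (eval rho t) | fNT t => Tn M (eval rho t)
  | fP t => Pp M (eval rho t) | fNP t => Pn M (eval rho t)
  | fAnd a b => satE M rho a /\ satE M rho b
  | fOr a b => satE M rho a \/ satE M rho b
  | fAll a => forall n, satE M (scons n rho) a
  | fEx a => exists n, satE M (scons n rho) a
  end.

Definition sat (M : pmodel) (f : form) : Prop := satE M (fun _ => 0) f.

Definition consistent (M : pmodel) : Prop :=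
  (forall n, ~ (Tp M n /\ Tn M n)) /\ (forall n, ~ (Pp M n /\ Pn M n)).

Inductive PAax : list form -> list form -> Prop :=
| pa_succ0 s : PAax [] [fNeq (tsucc s) tzero]
| pa_succinj s t : PAax [fEq (tsucc s) (tsucc t)] [fEq s t]
| pa_plus0 s : PAax [] [fEq (tplus s tzero) s]
| pa_plusS s t : PAax [] [fEq (tplus s (tsucc t)) (tsucc (tplus s t))]
| pa_mult0 s : PAax [] [fEq (tmult s tzero) tzero]
| pa_multS s t : PAax [] [fEq (tmult s (tsucc t)) (tplus (tmult s t) s)]
| pa_eqdec s t : PAax [] [fEq s t; fNeq s t].

(* sequents Gamma => Delta, treated as sets via the structural rule *)
Inductive deriv : list form -> list form -> Prop :=
| d_id f : deriv [f] [f]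
| d_struct G D G' D' : deriv G D -> incl G G' -> incl D D' -> deriv G' D'
| d_cut G D f : deriv G (f :: D) -> deriv (f :: G) D -> deriv G D
| d_neg G D f : deriv G (f :: D) -> deriv (neg f :: G) D
| d_andL G D a b : deriv (a :: b :: G) D -> deriv (fAnd a b :: G) D
| d_andR G D a b : deriv G (a :: D) -> deriv G (b :: D) -> deriv G (fAnd a b :: D)
| d_orL G D a b : deriv (a :: G) D -> deriv (b :: G) D -> deriv (fOr a b :: G) D
| d_orR G D a b : deriv G (a :: b :: D) -> deriv G (fOr a b :: D)
| d_allL G D a t : deriv (fsubst (inst t) a :: G) D -> deriv (fAll a :: G) D
| d_allR G D a : deriv (map shiftf G) (a :: map shiftf D) -> deriv G (fAll a :: D)
| d_exL G D a : deriv (a :: map shiftf G) (map shiftf D) -> deriv (fEx a :: G) D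
| d_exR G D a t : deriv G (fsubst (inst t) a :: D) -> deriv G (fEx a :: D)
| d_refl t : deriv [] [fEq t t]
| d_repl G D a s t :
    deriv G (fsubst (inst t) a :: D) ->
    deriv G (fNeq s t :: fsubst (inst s) a :: D)
| d_PA G D : PAax G D -> deriv G D
| d_ind G D a t :
    deriv (a :: map shiftf G) (fsubst succ0 a :: map shiftf D) ->
    deriv (fsubst (inst tzero) a :: G) (fsubst (inst t) a :: D).

Definition base_paradoxical (f : form) : Prop :=
  sentence f /\
  deriv [f] [fNT (quote f)] /\ deriv [fNT (quote f)] [f] /\
  deriv [neg f] [fT (quote f)] /\ deriv [fT (quote f)] [neg f].

(* the set defined in N by B(x) *)
Definition Bset (n : nat) : Prop :=
  exists f, base_paradoxical f /\ n = code f.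

(* (N,T,P) |=_SK P-script(#f), for a sentence f; arithmetic subformulas
   of P-script are bivalent in N and are evaluated directly. *)
Definition satPscr (M : pmodel) (f : form) : Prop :=
  (Bset (code f) \/ Bset (code (neg f)))
  \/ (exists t, f = fT t /\ Pp M (val t))
  \/ (exists t, f = fNT t /\ Pp M (val t))
  \/ (exists a b, f = fAnd a b /\
        ((Pp M (code a) /\ Pp M (code b)) \/ (Tp M (code a) /\ Pp M (code b))
         \/ (Tp M (code b) /\ Pp M (code a))))
  \/ (exists a b, f = fOr a b /\
        ((Pp M (code a) /\ Pp M (code b)) \/ (Tn M (code a) /\ Pp M (code b))
         \/ (Tn M (code b) /\ Pp M (code a))))
  \/ (exists a, f = fAll a /\
        (exists y, Pp M (code (fsubst (inst (num y)) a))) /\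
        (forall y, Pp M (code (fsubst (inst (num y)) a))
                   \/ Tp M (code (fsubst (inst (num y)) a))))
  \/ (exists a, f = fEx a /\
        (exists y, Pp M (code (fsubst (inst (num y)) a))) /\
        (forall y, Pp M (code (fsubst (inst (num y)) a))
                   \/ Tn M (code (fsubst (inst (num y)) a)))).

Definition jump (M : pmodel) : pmodel := {|
  Tp := fun n => exists f, sentence f /\ n = code f /\ sat M f;
  Tn := fun n => exists f, sentence f /\ n = code f /\ sat M (neg f);
  Pp := fun n => exists f, sentence f /\ n = code f /\ satPscr M f;
  Pn := fun n => exists f, sentence f /\ n = code f /\ sat M (fOr f (neg f)) |}.

Definition is_pred {W : Type} (R : W -> W -> Prop) (v w : W) : Prop :=
  R v w /\ (forall u, R u w -> u = v \/ R u v).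

Definition stage_step {W : Type} (R : W -> W -> Prop) (w : W)
  (rec : forall v, R v w -> pmodel) : pmodel :=
  match excluded_middle_informative (exists v, is_pred R v w) with
  | left H =>
      let (v, Hv) := constructive_indefinite_description _ H in
      jump (rec v (proj1 Hv))                        (* successor stage *)
  | right _ => {|                                    (* zero / limit: union *)
      Tp := fun n => exists v (h : R v w), Tp (rec v h) n;
      Tn := fun n => exists v (h : R v w), Tn (rec v h) n;
      Pp := fun n => exists v (h : R v w), Pp (rec v h) n;
      Pn := fun n => exists v (h : R v w), Pn (rec v h) n |}
  end.

(* stage W R wf w = (T_alpha, P_alpha) where alpha is the order type of
   the initial segment {v | R v w} *)
Definition stage {W : Type} (R : W -> W -> Prop) (wf : well_founded R) : W -> pmodel :=
  Fix wf (fun _ => pmodel) (stage_step R).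

(* Main.v *)
Require Import Defs.
From Stdlib Require Import List Arith Lia Cantor Classical FunctionalExtensionality ClassicalEpsilon.
Import ListNotations.

Lemma cp_inj a b c d : cp a b = cp c d -> a = c /\ b = d.
Proof.
  unfold cp; intro H.
  assert (E : Cantor.of_nat (Cantor.to_nat (a,b)) = Cantor.of_nat (Cantor.to_nat (c,d))) by now rewrite H.
  rewrite !Cantor.cancel_of_to in E. now inversion E.
Qed.

Lemma tcode_inj s t : tcode s = tcode t -> s = t.
Proof.
  revert t; induction s; destruct t; simpl; intro H;
  apply cp_inj in H; destruct H as [H1 H2]; try discriminate;
  try (apply cp_inj in H2; destruct H2);
  f_equal; auto.
Qed.

Lemma code_inj f g : code f = code g -> f = g.
Proof.
  revert g; induction f; destruct g; simpl; intro H;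
  apply cp_inj in H; destruct H as [H1 H2]; try discriminate;
  try (apply cp_inj in H2; destruct H2);
  f_equal; auto using tcode_inj.
Qed.

Lemma neg_neg f : neg (neg f) = f.
Proof. induction f; simpl; f_equal; auto. Qed.

Lemma neg_subst f : forall sg, neg (fsubst sg f) = fsubst sg (neg f).
Proof. induction f; intro sg; simpl; f_equal; auto. Qed.

Fixpoint fsize (f : form) : nat :=
  match f with
  | fAnd a b | fOr a b => S (fsize a + fsize b)
  | fAll a | fEx a => S (fsize a)
  | _ => 0
  end.

Lemma fsize_subst f : forall sg, fsize (fsubst sg f) = fsize f.
Proof. induction f; intro sg; simpl; auto. Qed.

Lemma eval_subst t : forall sg rho, eval rho (tsubst sg t) = eval (fun n => eval rho (sg n)) t.
Proof. induction t; intros; simpl; auto. Qed.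

Lemma eval_num n rho : eval rho (num n) = n.
Proof. induction n; simpl; auto. Qed.

Lemma satE_subst M f : forall sg rho,
  satE M rho (fsubst sg f) <-> satE M (fun n => eval rho (sg n)) f.
Proof.
  induction f; intros sg rho; simpl; rewrite ?eval_subst; try tauto.
  - rewrite IHf1, IHf2; tauto.
  - rewrite IHf1, IHf2; tauto.
  - split; intros H n; specialize (H n); rewrite IHf in *;
    (replace (fun m => eval (scons n rho) (up sg m)) with (scons n (fun m => eval rho (sg m))) in *
     by (apply functional_extensionality; intros [|k]; simpl; auto; now rewrite eval_subst)); auto.
  - split; intros [n H]; exists n; rewrite IHf in *;
    (replace (fun m => eval (scons n rho) (up sg m)) with (scons n (fun m => eval rho (sg m))) in *
     by (apply functional_extensionality; intros [|k]; simpl; auto; now rewrite eval_subst)); auto.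
Qed.

Lemma sat_inst M a y rho :
  satE M rho (fsubst (inst (num y)) a) <-> satE M (scons y rho) a.
Proof.
  rewrite satE_subst.
  replace (fun n => eval rho (inst (num y) n)) with (scons y rho); [tauto|].
  apply functional_extensionality; intros [|k]; simpl; auto. now rewrite eval_num.
Qed.

Lemma satE_shift M rho n f : satE M (scons n rho) (shiftf f) <-> satE M rho f.
Proof. unfold shiftf; rewrite satE_subst; simpl; tauto. Qed.

Lemma cons_sat M (HC : consistent M) f : forall rho, ~ (satE M rho f /\ satE M rho (neg f)).
Proof.
  destruct HC as [HT HP].
  induction f; intro rho; simpl; try firstorder.
Qed.

Definition valid M G D := forall rho, (forall g, In g G -> satE M rho g) -> exists d, In d D /\ satE M rho d.

Lemma shift_all M rho n G : (forall g, In g G -> satE M rho g) -> forall g, In g (map shiftf G) -> satE M (scons n rho) g.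
Proof. intros H g Hg. apply in_map_iff in Hg as [g' [<- Hg']]. rewrite satE_shift; auto. Qed.

Lemma shift_none M rho n D : ~ (exists d, In d D /\ satE M rho d) -> ~ exists d, In d (map shiftf D) /\ satE M (scons n rho) d.
Proof. intros H [d [Hd Hs]]. apply in_map_iff in Hd as [d' [<- Hd']]. rewrite satE_shift in Hs. eauto. Qed.

Lemma inst_env M rho t a : satE M rho (fsubst (inst t) a) <-> satE M (scons (eval rho t) rho) a.
Proof.
  rewrite satE_subst.
  replace (fun n => eval rho (inst t n)) with (scons (eval rho t) rho); [tauto|].
  apply functional_extensionality; intros [|k]; simpl; auto.
Qed.

Ltac inD := match goal with H : In ?d ?D, H2 : satE _ _ ?d |- exists _, In _ (_ :: ?D) /\ _ => exists d; split; [right; exact H | exact H2] end.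

Lemma deriv_sound M (HC : consistent M) G D : deriv G D -> valid M G D.
Proof.
  induction 1; intros rho HG.
  - exists f; split; [now left|]. apply HG; now left.
  - destruct (IHderiv rho) as [d [Hd Hs]]; eauto.
  - destruct (IHderiv1 rho HG) as [d [[<-|Hd] Hs]]; eauto.
    apply IHderiv2. intros g [<-|Hg]; auto.
  - destruct (IHderiv rho) as [d [[<-|Hd] Hs]]; [intros; apply HG; now right| |eauto].
    exfalso; apply (cons_sat M HC f rho). split; auto. apply HG; now left.
  - apply IHderiv. assert (Hab := HG _ (or_introl eq_refl)); simpl in Hab.
    intros g [<-|[<-|Hg]]; try tauto. apply HG; now right.
  - destruct (IHderiv1 rho HG) as [d [[<-|Hd] Hs]]; [|inD].
    destruct (IHderiv2 rho HG) as [d [[<-|Hd] Hs']]; [|inD].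
    exists (fAnd a b); simpl; split; auto.


  - assert (Hab := HG _ (or_introl eq_refl)); simpl in Hab. destruct Hab as [Ha|Hb].
    + apply IHderiv1. intros g [<-|Hg]; auto. apply HG; now right.
    + apply IHderiv2. intros g [<-|Hg]; auto. apply HG; now right.
  - destruct (IHderiv rho HG) as [d [[<-|[<-|Hd]] Hs]].
    + exists (fOr a b); simpl; auto.
    + exists (fOr a b); simpl; auto.
    + exists d; simpl; auto.
  - apply IHderiv. assert (Hab := HG _ (or_introl eq_refl)); simpl in Hab.
    intros g [<-|Hg]; [|apply HG; now right]. apply inst_env; auto.
  - destruct (classic (exists d, In d D /\ satE M rho d)) as [Y|N].
    + destruct Y as [d [Hd Hs]]; exists d; simpl; auto.
    + exists (fAll a); simpl; split; auto. intro n.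
      destruct (IHderiv (scons n rho)) as [d [[<-|Hd] Hs]]; auto.
      * apply shift_all; auto.
      * exfalso; apply (shift_none M rho n D N); eauto.
  - assert (Hab := HG _ (or_introl eq_refl)); simpl in Hab. destruct Hab as [n Hn].
    destruct (IHderiv (scons n rho)) as [d [Hd Hs]].
    + intros g [<-|Hg]; auto. apply (shift_all M rho n G); auto. intros; apply HG; now right.
    + apply in_map_iff in Hd as [d' [<- Hd']]. rewrite satE_shift in Hs. eauto.
  - destruct (IHderiv rho HG) as [d [[<-|Hd] Hs]]; [|exists d; simpl; auto].
    exists (fEx a); simpl; split; auto. exists (eval rho t); apply inst_env; auto.
  - exists (fEq t t); simpl; auto.
  - destruct (Nat.eq_dec (eval rho s) (eval rho t)) as [E|E].
    + destruct (IHderiv rho HG) as [d [[<-|Hd] Hs]]; [|exists d; simpl; auto].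
      exists (fsubst (inst s) a); simpl; split; auto. rewrite inst_env, E. apply inst_env; auto.
    + exists (fNeq s t); simpl; auto.
  - destruct H; simpl in *.
    + exists (fNeq (tsucc s) tzero); simpl; auto.
    + exists (fEq s t); simpl; split; auto. assert (Hh := HG _ (or_introl eq_refl)); simpl in Hh; lia.
    + exists (fEq (tplus s tzero) s); simpl; split; auto; lia.
    + eexists; split; [now left|]; simpl; lia.
    + eexists; split; [now left|]; simpl; lia.
    + eexists; split; [now left|]; simpl; lia.
    + destruct (Nat.eq_dec (eval rho s) (eval rho t)).
      * exists (fEq s t); simpl; auto.
      * exists (fNeq s t); simpl; auto.
  - destruct (classic (exists d, In d D /\ satE M rho d)) as [Y|N].
    + destruct Y as [d [Hd Hs]]; exists d; simpl; auto.
    + exists (fsubst (inst t) a); simpl; split; auto. apply inst_env.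
      assert (H0 := HG _ (or_introl eq_refl)). rewrite inst_env in H0. simpl in H0.
      generalize (eval rho t) as m. intro m. induction m; auto.
      destruct (IHderiv (scons m rho)) as [d [[<-|Hd] Hs]].
      * intros g [<-|Hg]; auto. apply (shift_all M rho m G); auto. intros; apply HG; now right.
      * rewrite satE_subst in Hs.
        replace (fun n => eval (scons m rho) (succ0 n)) with (scons (S m) rho) in Hs; auto.
        apply functional_extensionality; intros [|k]; simpl; auto.
      * exfalso; apply (shift_none M rho m D N); eauto.
Qed.

Definition le (M N : pmodel) : Prop :=
  (forall n, Tp M n -> Tp N n) /\ (forall n, Tn M n -> Tn N n) /\
  (forall n, Pp M n -> Pp N n) /\ (forall n, Pn M n -> Pn N n).

Lemma satE_mono M N (H : le M N) f : forall rho, satE M rho f -> satE N rho f.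
Proof. destruct H as [H1 [H2 [H3 H4]]]. induction f; intro rho; simpl; try solve [auto].
  - intros [A B]; split; auto.
  - intros [A|B]; [left|right]; auto.
  - intros [n A]; exists n; auto.
Qed.

Lemma Pscr_mono M N (H : le M N) f : satPscr M f -> satPscr N f.
Proof.
  destruct H as [H1 [H2 [H3 H4]]]. unfold satPscr.
  intros [X|[X|[X|[X|[X|[X|X]]]]]].
  - left; auto.
  - right; left. destruct X as [t [E X]]; exists t; auto.
  - right; right; left. destruct X as [t [E X]]; exists t; auto.
  - do 3 right; left. destruct X as [a [b [E X]]]; exists a, b; split; auto.
    destruct X as [[A B]|[[A B]|[A B]]]; auto.
  - do 4 right; left. destruct X as [a [b [E X]]]; exists a, b; split; auto.
    destruct X as [[A B]|[[A B]|[A B]]]; auto.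
  - do 5 right; left. destruct X as [a [E [[y Y] X]]]; exists a; split; auto; split; [exists y; auto|].
    intro z; destruct (X z); auto.
  - do 6 right. destruct X as [a [E [[y Y] X]]]; exists a; split; auto; split; [exists y; auto|].
    intro z; destruct (X z); auto.
Qed.

Lemma jump_mono M N : le M N -> le (jump M) (jump N).
Proof.
  intro H; repeat split; simpl; intros n [f [Hs [E X]]]; exists f; repeat split; auto.
  - eapply satE_mono; eauto.
  - eapply satE_mono; eauto.
  - eapply Pscr_mono; eauto.
  - eapply satE_mono with (f := fOr f (neg f)); eauto.
Qed.

Definition CC (M : pmodel) : Prop :=
  (forall n, Tp M n -> Pn M n) /\ (forall n, Tn M n -> Pn M n).

Lemma stage_eq {W} (R : W -> W -> Prop) (wf : well_founded R) w :
  stage R wf w = stage_step R w (fun v _ => stage R wf v).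
Proof.
  unfold stage. rewrite (Fix_eq wf (fun _ => pmodel) (stage_step R)); [reflexivity|]. intros x f g Hfg.
  assert (E : f = g) by (apply functional_extensionality_dep; intro; apply functional_extensionality_dep; auto).
  now subst.
Qed.

Lemma stage_props {W} (R : W -> W -> Prop) (wf : well_founded R) w :
  le (stage R wf w) (jump (stage R wf w)) /\ CC (stage R wf w).
Proof.
  induction w as [w IH] using (well_founded_induction wf).
  rewrite stage_eq. unfold stage_step.
  destruct (excluded_middle_informative _) as [Hx|Hx].
  - destruct (constructive_indefinite_description _ Hx) as [v Hv].
    destruct (IH v (proj1 Hv)) as [IA IC]. split.
    + apply jump_mono. exact IA.
    + split; simpl; intros n [f [Hs [E X]]]; exists f; repeat split; simpl; auto. all: unfold sat in *; simpl; auto.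
  - set (U := {| Tp := _ |}).
    assert (LU : forall v (h : R v w), le (stage R wf v) U).
    { intros v h; repeat split; simpl; intros n X; exists v, h; exact X. }
    split.
    + repeat split; intros n [v [h X]]; destruct (IH v h) as [[A1 [A2 [A3 A4]]] _];
        apply (jump_mono _ _ (LU v h)); auto.
    + split; intros n [v [h X]]; exists v, h; destruct (IH v h) as [_ [C1 C2]]; auto.
Qed.

Section S.
Variable M : pmodel.
Hypothesis HC : consistent M.
Hypothesis HA : le M (jump M).
Hypothesis HCC : CC M.

Lemma TpE g : Tp M (code g) -> sat M g.
Proof. intro H. destruct HA as [A _]. destruct (A _ H) as [f [_ [E X]]]. apply code_inj in E; now subst. Qed.
Lemma TnE g : Tn M (code g) -> sat M (neg g).
Proof. intro H. destruct HA as [_ [A _]]. destruct (A _ H) as [f [_ [E X]]]. apply code_inj in E; now subst. Qed.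
Lemma PpE g : Pp M (code g) -> satPscr M g.
Proof. intro H. destruct HA as [_ [_ [A _]]]. destruct (A _ H) as [f [_ [E X]]]. apply code_inj in E; now subst. Qed.

Lemma killT g : Tp M (code g) -> sat M (neg g) -> False.
Proof. intros H1 H2. apply (cons_sat M HC g (fun _ => 0)). split; auto. now apply TpE. Qed.
Lemma killTn g : Tn M (code g) -> sat M g -> False.
Proof. intros H1 H2. apply (cons_sat M HC g (fun _ => 0)). split; auto. now apply TnE. Qed.

Lemma bp_case f : base_paradoxical f -> sat M f \/ sat M (neg f) -> False.
Proof.
  intros [_ [D1 [_ [D2 _]]]] [H|H].
  - destruct (deriv_sound M HC _ _ D1 (fun _ => 0)) as [d [[<-|[]] Hd]].
    + intros g [<-|[]]; auto.
    + simpl in Hd. unfold quote in Hd. rewrite eval_num in Hd. eapply killTn; eauto.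
  - destruct (deriv_sound M HC _ _ D2 (fun _ => 0)) as [d [[<-|[]] Hd]].
    + intros g [<-|[]]; auto.
    + simpl in Hd. unfold quote in Hd. rewrite eval_num in Hd. eapply killT; eauto.
Qed.

Lemma sound_main : forall n f, fsize f < n -> sat M f \/ sat M (neg f) -> satPscr M f -> False.
Proof.
  induction n as [|n IH]; intros f Hf Hs HP; [lia|].
  assert (killP : forall g, fsize g < fsize f -> Pp M (code g) -> sat M g \/ sat M (neg g) -> False).
  { intros g Hg Hp Hg2. apply (IH g); [lia|auto|]. now apply PpE. }
  destruct HP as [X|[X|[X|[X|[X|[X|X]]]]]].
  - destruct X as [[g [Hg E]]|[g [Hg E]]]; apply code_inj in E; subst.
    + eapply bp_case; eauto.
    + eapply bp_case; eauto. rewrite neg_neg. tauto.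
  - destruct X as [t [-> X]]. destruct HC as [_ HP].
    apply (HP (val t)); split; auto. destruct HCC as [C1 C2].
    destruct Hs as [Hs|Hs]; unfold sat in Hs; simpl in Hs; auto.
  - destruct X as [t [-> X]]. destruct HC as [_ HP].
    apply (HP (val t)); split; auto. destruct HCC as [C1 C2].
    destruct Hs as [Hs|Hs]; unfold sat in Hs; simpl in Hs; auto.
  - destruct X as [a [b [-> X]]]. simpl in Hf.
    assert (Ha : fsize a < fsize (fAnd a b)) by (simpl; lia).
    assert (Hb : fsize b < fsize (fAnd a b)) by (simpl; lia).
    unfold sat in Hs; simpl in Hs.
    destruct X as [[A B]|[[A B]|[A B]]];
    destruct Hs as [[S1 S2]|[S1|S1]];
    first [ now apply (killP a Ha A); unfold sat; auto
          | now apply (killP b Hb B); unfold sat; auto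
          | now apply (killP a Ha B); unfold sat; auto
          | now apply (killP b Hb A); unfold sat; auto
          | now apply (killT a A)
          | now apply (killT b A) ].
  - destruct X as [a [b [-> X]]]. simpl in Hf.
    assert (Ha : fsize a < fsize (fOr a b)) by (simpl; lia).
    assert (Hb : fsize b < fsize (fOr a b)) by (simpl; lia).
    unfold sat in Hs; simpl in Hs.
    destruct X as [[A B]|[[A B]|[A B]]];
    destruct Hs as [[S1|S1]|[S1 S2]];
    first [ now apply (killP a Ha A); unfold sat; auto
          | now apply (killP b Hb B); unfold sat; auto
          | now apply (killP a Ha B); unfold sat; auto
          | now apply (killP b Hb A); unfold sat; auto
          | now apply (killTn a A)
          | now apply (killTn b A) ].
  - destruct X as [a [-> [[y Y] X]]].
    unfold sat in Hs; simpl in Hs.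
    destruct Hs as [Hs|[m Hs]].
    + apply (killP (fsubst (inst (num y)) a) ltac:(rewrite fsize_subst; simpl; lia) Y). left.
      unfold sat; rewrite sat_inst; auto.
    + assert (Hn : sat M (neg (fsubst (inst (num m)) a))).
      { unfold sat; rewrite neg_subst, sat_inst; auto. }
      destruct (X m) as [Z|Z].
      * apply (killP (fsubst (inst (num m)) a) ltac:(rewrite fsize_subst; simpl; lia) Z). auto.
      * exact (killT _ Z Hn).
  - destruct X as [a [-> [[y Y] X]]].
    unfold sat in Hs; simpl in Hs.
    destruct Hs as [[m Hs]|Hs].
    + assert (Hn : sat M (fsubst (inst (num m)) a)).
      { unfold sat; rewrite sat_inst; auto. }
      destruct (X m) as [Z|Z].
      * apply (killP (fsubst (inst (num m)) a) ltac:(rewrite fsize_subst; simpl; lia) Z). auto.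
      * exact (killTn _ Z Hn).
    + apply (killP (fsubst (inst (num y)) a) ltac:(rewrite fsize_subst; simpl; lia) Y). right.
      unfold sat; rewrite neg_subst, sat_inst; auto.
Qed.
End S.

Theorem mainTheorem7 :
  forall (W : Type) (R : W -> W -> Prop) (Rwf : well_founded R)
         (Rtrans : forall x y z, R x y -> R y z -> R x z)
         (Rtot : forall x y, R x y \/ x = y \/ R y x)
         (w : W),
    consistent (stage R Rwf w) ->
    forall f : form, sentence f ->
      ~ sat (stage R Rwf w) (fOr f (neg f)) \/ ~ satPscr (stage R Rwf w) f.
Proof.
  intros W R Rwf _ _ w HC f _.
  destruct (stage_props R Rwf w) as [HA HCC].
  destruct (classic (sat (stage R Rwf w) (fOr f (neg f)))) as [Hs|Hs]; [right|left; auto].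
  intro HP. apply (sound_main _ HC HA HCC (S (fsize f)) f); auto.
Qed.
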